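(* Let $G$ be an oriented graph derived from a Burling tree $(T,r,\ell,c)$, and let $u,v,w$ be three distinct vertices of $G$ appearing in this order along a branch of $T$. Then every path (not necessarily directed) in $G$ from $u$ to $w$ goes through an in-neighbor of $v$ in $G$. In particular, $N^-[v]$ is a full in-star cutset of $G$ and $N[v]$ is a full star cutset of $G$, each of which separates $u$ and $w$.
   Context: Oriented graphs are finite, without loops, multiple arcs or pairs of opposite arcs; paths and connectivity in an oriented graph refer to its underlying graph. In a rooted tree $T$ with root $r$, each non-root vertex $v$ has a parent $p(v)$; children, leaves, ancestors and descendants are as usual. A branch is a sequence $v_1\dots v_k$ ($k\ge0$) with $v_i$ the parent of $v_{i+1}$; it starts at $v_1$. A Burling tree is a 4-tuple $(T,r,\ell,c)$: $T$ a rooted tree with root $r$; $\ell$ assigns to each non-leaf vertex $v$ one of its children $\ell(v)$ (the last-born of $v$); $c$ assigns to every vertex $v$ that is neither the root nor a last-born the vertex-set of a (possibly empty) branch starting at $\ell(p(v))$, and $c(v)=\emptyset$ if $v$ is the root or a last-born. The oriented graph fully derived from it has vertex-set $V(T)$ and an arc $uv$ iff $v\in c(u)$; an oriented graph is derived from the Burling tree if it is an induced subgraph of the fully derived one. $N^-[v]$ is $v$ together with its in-neighbors, and $N[v]$ is $v$ together with all its neighbors. A full in-star cutset of $G$ is a set $N^-[v]$ such that $G\setminus N^-[v]$ is disconnected; a full star cutset is a set $N[v]$ such that $G\setminus N[v]$ is disconnected. A set $S$ separates $u$ and $w$ if $u$ and $w$ lie in distinct connected components of $G\setminus S$. *)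

(* Defs.v *)
From mathcomp Require Import all_boot.
Set Implicit Arguments. Unset Strict Implicit. Unset Printing Implicit Defensive.

(* A rooted tree on a finite vertex type V is given by a root r and a parent
   map par with par r = r, every vertex reaching r by iterating par.
   (The tree edges are {x, par x} for x <> r.) *)
Definition is_rooted_tree (V : finType) (r : V) (par : V -> V) : Prop :=
  par r = r /\ forall x : V, exists n, iter n par x = r.

Definition is_child (V : finType) (r : V) (par : V -> V) (x y : V) : bool :=
  (x != r) && (par x == y).

(* vertex set of a (possibly empty) branch starting at x:
   either empty, or {x = v_1, ..., v_k} with v_i the parent of v_{i+1} *)
Definition is_branch_set_from (V : finType) (r : V) (par : V -> V)
    (x : V) (B : {set V}) : Prop :=
  B = set0 \/
  exists s : seq V, path (fun a b => is_child r par b a) x s /\ B = [set:: x :: s].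

Record burling_tree (V : finType) := BurlingTree {
  bt_root : V;
  bt_par : V -> V;
  bt_last : V -> V;          (* last-born of a non-leaf vertex *)
  bt_c : V -> {set V};
  bt_tree : is_rooted_tree bt_root bt_par;
  bt_last_child : forall v : V, (exists x, is_child bt_root bt_par x v) ->
                    is_child bt_root bt_par (bt_last v) v;
  bt_c_spec : forall v : V,
    if (v == bt_root) || (bt_last (bt_par v) == v)
    then bt_c v = set0
    else is_branch_set_from bt_root bt_par (bt_last (bt_par v)) (bt_c v)
}.

Section Derived.
Variables (V : finType) (B : burling_tree V).

Definition strict_anc (a b : V) : Prop :=
  a <> b /\ exists n, iter n (bt_par B) b = a.

(* the fully derived oriented graph: arc x -> y iff y \in c x;
   G is the induced subgraph on the vertex set S *)
Definition g_arc (S : {set V}) (x y : V) : bool :=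
  [&& x \in S, y \in S & y \in bt_c B x].

Definition g_adj (S : {set V}) (x y : V) : bool := g_arc S x y || g_arc S y x.

Definition in_nbhd_closed (S : {set V}) (v : V) : {set V} :=
  v |: [set x in S | g_arc S x v].
Definition nbhd_closed (S : {set V}) (v : V) : {set V} :=
  v |: [set x in S | g_adj S x v].

Definition connected_avoiding (S X : {set V}) (a b : V) : Prop :=
  a \in S :\: X /\
  exists p : seq V, path (fun x y => g_adj S x y && (y \notin X)) a p /\ last a p = b.

Definition separates (S X : {set V}) (a b : V) : Prop :=
  a \in S :\: X /\ b \in S :\: X /\ ~ connected_avoiding S X a b.

Definition disconnected_after (S X : {set V}) : Prop :=
  exists a b, a \in S :\: X /\ b \in S :\: X /\ ~ connected_avoiding S X a b.

Definition full_in_star_cutset (S : {set V}) (v : V) : Prop :=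
  v \in S /\ disconnected_after S (in_nbhd_closed S v).
Definition full_star_cutset (S : {set V}) (v : V) : Prop :=
  v \in S /\ disconnected_after S (nbhd_closed S v).

End Derived.

(* Main.v *)
From Stdlib Require Import Classical.
Require Import Defs.
From mathcomp Require Import all_boot.
Set Implicit Arguments. Unset Strict Implicit.

Section Aux.
Variables (V : finType) (B : burling_tree V).
Local Notation par := (bt_par B).
Local Notation rt := (bt_root B).

Definition anc (a b : V) : Prop := exists n, iter n par b = a.

Lemma anc_refl a : anc a a. Proof. by exists 0. Qed.
Lemma anc_par a : anc (par a) a. Proof. by exists 1. Qed.
Lemma anc_trans a b c : anc a b -> anc b c -> anc a c.
Proof. move=> [n Hn] [m Hm]; exists (n + m); by rewrite iterD Hm. Qed.

Lemma iter_root n : iter n par rt = rt.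
Proof. case: (bt_tree B) => Hr _; elim: n => //= n ->; exact Hr. Qed.

Lemma anc_total a b x : anc a x -> anc b x -> anc a b \/ anc b a.
Proof.
move=> [n Hn] [m Hm]; case: (leqP n m) => H.
  right; exists (m - n); by rewrite -Hn -iterD subnK.
left; exists (n - m); rewrite -Hm -iterD subnK //; exact: ltnW.
Qed.

Lemma anc_antisym a b : anc a b -> anc b a -> a = b.
Proof.
move=> [n Hn] [m Hm].
have Hk : iter (m + n) par b = b by rewrite iterD Hn.
case Ek: (m + n) Hk => [|k] Hk.
  move/eqP: Ek; rewrite addn_eq0 => /andP[_ /eqP E0]. by rewrite -Hn E0.
have Hj : forall j, iter (j * k.+1) par b = b.
  elim=> [|j IH] //. by rewrite mulSn iterD IH.
case: (bt_tree B) => _ /(_ b) [N HN].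
have Hb : b = rt.
  rewrite -(Hj N) -(subnK (_ : N <= N * k.+1)) ?iterD ?HN ?iter_root //.
  by rewrite leq_pmulr.
by rewrite -Hn Hb iter_root.
Qed.

Lemma anc_parS z a : anc z a -> z <> a -> anc z (par a).
Proof.
move=> [[|n] Hn] ne; first by rewrite -Hn in ne.
exists n; by rewrite -iterSr.
Qed.

Lemma anc_par_root x : anc x (par x) -> x = rt.
Proof.
move=> H; have E := anc_antisym H (anc_par x).
have Hi : forall n, iter n par x = x by elim=> //= n ->; rewrite -E.
case: (bt_tree B) => _ /(_ x) [N HN]; by rewrite -(Hi N).
Qed.

Definition chainrel := fun a b => is_child rt par b a.

Lemma chain_anc L s y : path chainrel L s -> y \in L :: s -> anc L y.
Proof.
elim: s L => [|a s IH] L /=.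
  by rewrite inE => _ /eqP ->; apply anc_refl.
move=> /andP[/andP[_ /eqP Ha] Hp]; rewrite inE => /orP[/eqP ->|Hy].
  exact: anc_refl.
apply: anc_trans (IH _ Hp Hy); rewrite -Ha; exact: anc_par.
Qed.

Lemma chain_between L s y z : path chainrel L s -> y \in L :: s ->
  anc L z -> anc z y -> z \in L :: s.
Proof.
elim: s L => [|a s IH] L /=.
  rewrite inE => _ /eqP -> H1 H2; by rewrite (anc_antisym H2 H1) inE.
move=> /andP[/andP[_ /eqP Ha] Hp]; rewrite inE => /orP[/eqP ->|Hy] H1 H2.
  by rewrite (anc_antisym H2 H1) inE eqxx.
have Hay := chain_anc Hp Hy.
case: (anc_total Hay H2) => H.
  by rewrite inE (IH _ Hp Hy H H2) orbT.
case: (eqVneq z a) => [->|ne]; first by rewrite !inE eqxx orbT.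
have := anc_parS H (elimN eqP ne) ; rewrite Ha => H3.
by rewrite (anc_antisym H3 H1) inE eqxx.
Qed.

Lemma arc_info x y : y \in bt_c B x ->
  let L := bt_last B (par x) in
  [/\ x != rt, L != x, L != rt, par L = par x &
   exists s, path chainrel L s /\ bt_c B x = [set:: L :: s] /\ y \in L :: s].
Proof.
move=> Hy /=; have := bt_c_spec B x.
case: ifP => [_ Hc|/norP[xr Lx]]; first by rewrite Hc inE in Hy.
case=> [Hc|[s [Hp Hc]]]; first by rewrite Hc inE in Hy.
have Hch : is_child rt par x (par x) by rewrite /is_child xr eqxx.
have /andP[Lr /eqP HL] := bt_last_child (ex_intro _ x Hch).
split => //.
exists s; split => //; split => //; by rewrite Hc inE in Hy.
Qed.

Lemma arc_not_anc x y : y \in bt_c B x -> ~ anc x y /\ ~ anc y x.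
Proof.
move=> /arc_info [xr Lx Lr HL [s [Hp [Hc Hy]]]].
move: (bt_last B (par x)) Lx Lr HL Hp Hc Hy => L Lx Lr HL Hp Hc Hy.
have HLy := chain_anc Hp Hy.
split => H.
  case: (anc_total HLy H) => H1.
    have := anc_parS H1 (elimN eqP Lx); rewrite -HL => HH; have E := anc_par_root HH.
    by rewrite E eqxx in Lr.
  have := anc_parS H1 (fun E => elimN eqP Lx (esym E)); rewrite HL.
  move=> HH; have E := anc_par_root HH; by rewrite E eqxx in xr.
have H1 := anc_trans HLy H.
have := anc_parS H1 (elimN eqP Lx); rewrite -HL => HH; have E := anc_par_root HH.
by rewrite E eqxx in Lr.
Qed.

Lemma main_path (S : {set V}) v w : v \in S -> anc v w -> w <> v ->
  forall p a, (~ anc v a \/ a = v) -> path (g_adj B S) a p -> last a p = w ->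
  exists x, x \in a :: p /\ g_arc B S x v.
Proof.
move=> vS Hvw wv; elim=> [|b p IH] a Ha /=.
  move=> _ E; subst; case: Ha => // H; by case: H.
move=> /andP[Hab Hp] Hl.
have lift : forall x, x \in b :: p -> x \in a :: b :: p.
  by move=> x Hx; rewrite inE Hx orbT.
case: Ha => [Ha|Ea].
  case: (classic (anc v b)) => Hb; last first.
    have [x [Hx Hxv]] := IH b (or_introl Hb) Hp Hl; exists x; split => //; exact: lift.
  move: Hab; rewrite /g_adj => /orP[|] /and3P[aS bS Hc].
    have [xr Lx Lr HL [s [Hpc [Hcx Hy]]]] := arc_info Hc.
    move: (bt_last B (par a)) Lx Lr HL Hpc Hcx Hy => L Lx Lr HL Hpc Hcx Hy.
    have HLb := chain_anc Hpc Hy.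
    have HLv : anc L v.
      case: (anc_total HLb Hb) => // H.
      case: (eqVneq v L) => [->|ne]; first exact: anc_refl.
      exfalso; apply: Ha; have := anc_parS H (elimN eqP ne); rewrite HL => H2.
      exact: anc_trans H2 (anc_par a).
    have Hvin := chain_between Hpc Hy HLv Hb.
    exists a; split; first by rewrite inE eqxx.
    by rewrite /g_arc aS vS Hcx inE.
  case: (eqVneq b v) => [Ebv|ne].
    have [x [Hx Hxv]] := IH b (or_intror Ebv) Hp Hl; exists x; split => //; exact: lift.
  exfalso; apply: Ha.
  have [xr Lx Lr HL [s [Hpc [Hcx Hy]]]] := arc_info Hc.
  move: (bt_last B (par b)) Lx Lr HL Hpc Hcx Hy => L Lx Lr HL Hpc Hcx Hy.
  have HLa := chain_anc Hpc Hy.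
  have := anc_parS Hb (fun E => elimN eqP ne (esym E)); rewrite -HL => H2.
  exact: anc_trans (anc_trans H2 (anc_par _)) HLa.
subst a.
move: Hab; rewrite /g_adj => /orP[|] Harc.
  move: Harc => /and3P[_ bS Hc].
  have [Hnb _] := arc_not_anc Hc.
  have [x [Hx Hxv]] := IH b (or_introl Hnb) Hp Hl; exists x; split => //; exact: lift.
exists b; split => //; by rewrite !inE eqxx orbT.
Qed.

Lemma path_notin (e : rel V) (X : {set V}) a p x :
  path (fun x y => e x y && (y \notin X)) a p -> x \in p -> x \notin X.
Proof.
elim: p a => [|b p IH] a //= /andP[/andP[_ Hb] Hp]; rewrite inE => /orP[/eqP ->|Hx] //.
exact: IH Hp Hx.
Qed.

Lemma sep_gen S (X : {set V}) u v w :
  (forall p, path (g_adj B S) u p -> last u p = w ->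
     exists x, x \in u :: p /\ g_arc B S x v) ->
  (forall x, g_arc B S x v -> x \in X) ->
  u \in S :\: X -> w \in S :\: X -> separates B S X u w.
Proof.
move=> Hm HX Hu Hw; split => //; split => //.
move=> [_ [p [Hp Hl]]].
have Hp' : path (g_adj B S) u p.
  by apply: sub_path Hp => x y /andP[].
have [x [Hx Hxv]] := Hm p Hp' Hl.
have xX := HX x Hxv.
move: Hx; rewrite inE => /orP[/eqP E|Hx].
  subst; move: Hu; by rewrite inE xX.
by move: (path_notin Hp Hx); rewrite xX.
Qed.

End Aux.

Theorem lemma5p3 (V : finType) (B : burling_tree V) (S : {set V}) (u v w : V) :
  u \in S -> v \in S -> w \in S ->
  strict_anc B u v -> strict_anc B v w ->
  (forall p : seq V, path (g_adj B S) u p -> last u p = w -> uniq (u :: p) ->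
     exists x, x \in u :: p /\ g_arc B S x v)
  /\ full_in_star_cutset B S v /\ separates B S (in_nbhd_closed B S v) u w
  /\ full_star_cutset B S v /\ separates B S (nbhd_closed B S v) u w.
Proof.
move=> uS vS wS [uv Huv] [vw Hvw].
have Huv' : anc B u v by [].
have Hvw' : anc B v w by [].
have Hnvu : ~ anc B v u by move=> H; apply: uv; exact: anc_antisym Huv' H.
have Hm : forall p, path (g_adj B S) u p -> last u p = w ->
     exists x, x \in u :: p /\ g_arc B S x v.
  move=> p Hp Hl; apply: (main_path vS Hvw' (fun E => vw (esym E)) (or_introl Hnvu) Hp Hl).
have n1 : ~~ g_arc B S u v.
  apply/negP => /and3P[_ _ /arc_not_anc [H _]]; exact: H.
have n2 : ~~ g_arc B S v u.
  apply/negP => /and3P[_ _ /arc_not_anc [_ H]]; exact: H.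
have n3 : ~~ g_arc B S w v.
  apply/negP => /and3P[_ _ /arc_not_anc [_ H]]; exact: H.
have n4 : ~~ g_arc B S v w.
  apply/negP => /and3P[_ _ /arc_not_anc [H _]]; exact: H.
have uv' : (u == v) = false by apply/eqP.
have wv' : (w == v) = false by apply/eqP => E; apply: vw; rewrite E.
have S1 : separates B S (in_nbhd_closed B S v) u w.
  apply: sep_gen Hm _ _ _.
  - move=> x Hx; rewrite /in_nbhd_closed !inE Hx.
    by move: Hx => /and3P[-> _ _]; rewrite orbT.
  - by rewrite /in_nbhd_closed !inE uv' (negbTE n1) uS andbF.
  - by rewrite /in_nbhd_closed !inE wv' (negbTE n3) wS andbF.
have S2 : separates B S (nbhd_closed B S v) u w.
  apply: sep_gen Hm _ _ _.
  - move=> x Hx; rewrite /nbhd_closed !inE /g_adj Hx.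
    by move: Hx => /and3P[-> _ _]; rewrite orbT.
  - by rewrite /nbhd_closed !inE /g_adj uv' (negbTE n1) (negbTE n2) uS andbF.
  - by rewrite /nbhd_closed !inE /g_adj wv' (negbTE n3) (negbTE n4) wS andbF.
split; first by move=> p Hp Hl _; exact: Hm.
case: S1 => a1 [a2 a3]; case: S2 => b1 [b2 b3].
split; first by split => //; exists u, w.
split; first by [].
split; first by split => //; exists u, w.
by [].
Qed.
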